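(* Let $(X,\mathcal{O}(X))$ be a measurable space, $\mathcal{A}$ a unital $C^*$-algebra and $\mathcal{H}$ a Hilbert space with $\dim\mathcal{H}<\infty$. Then every $C^*$-extreme point of $I_{\mathcal{H}}(X,\mathcal{A})$ is an extreme point of the convex set $I_{\mathcal{H}}(X,\mathcal{A})$.
   Context: A CP instrument is a map $\mathcal{I}$ from $\mathcal{O}(X)$ to the completely positive maps $\mathcal{A}\to\mathcal{B}(\mathcal{H})$ such that for all $a\in\mathcal{A}$, $h,k\in\mathcal{H}$, $A\mapsto\langle h,\mathcal{I}(A)(a)k\rangle$ is a countably additive complex measure. It is UCP if $\mathcal{I}(X)(1_\mathcal{A})=I_\mathcal{H}$; $I_{\mathcal{H}}(X,\mathcal{A})$ is the (convex) set of UCP instruments. A $C^*$-convex combination of $\mathcal{I}$ is $\mathcal{I}(\cdot)=\sum_{i=1}^nT_i^*\mathcal{I}_i(\cdot)T_i$ with $\mathcal{I}_i\in I_{\mathcal{H}}(X,\mathcal{A})$, $T_i\in\mathcal{B}(\mathcal{H})$, $\sum T_i^*T_i=I_\mathcal{H}$; proper if all $T_i$ are invertible. $\mathcal{I}\in I_{\mathcal{H}}(X,\mathcal{A})$ is $C^*$-extreme if for every proper $C^*$-convex combination of $\mathcal{I}$ there are unitaries $U_i\in\mathcal{B}(\mathcal{H})$ with $\mathcal{I}_i(\cdot)=U_i^*\mathcal{I}(\cdot)U_i$ for all $i$. *)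

(* Defs.v *)
From HB Require Import structures.
From mathcomp Require Import all_boot all_order all_algebra.
From mathcomp Require Import complex.
From mathcomp Require Import classical_sets boolp reals measure.
Set Implicit Arguments. Unset Strict Implicit. Unset Printing Implicit Defensive.
Import Order.TTheory GRing.Theory Num.Theory.
Local Open Scope ring_scope.
Local Open Scope classical_set_scope.

Record cstar_axioms (R : realType) (A : algType R[i])
    (star : A -> A) (nrm : A -> R) : Prop := {
  star_add : forall a b : A, star (a + b) = star a + star b;
  star_scale : forall (c : R[i]) (a : A), star (c *: a) = (c^*)%C *: star a;
  star_mul : forall a b : A, star (a * b) = star b * star a;
  star_invol : forall a : A, star (star a) = a;
  nrm_ge0 : forall a : A, 0 <= nrm a;
  nrm_eq0 : forall a : A, nrm a = 0 -> a = 0;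
  nrm_triangle : forall a b : A, nrm (a + b) <= nrm a + nrm b;
  nrm_scale : forall (c : R[i]) (a : A), nrm (c *: a) = ComplexField.Normc.normc c * nrm a;
  nrm_submult : forall a b : A, nrm (a * b) <= nrm a * nrm b;
  cstar_identity : forall a : A, nrm (star a * a) = nrm a ^+ 2;
  nrm_complete : forall u : nat -> A,
    (forall e : R, 0 < e -> exists N : nat, forall p q : nat,
        (N <= p)%N -> (N <= q)%N -> nrm (u p - u q) < e) ->
    exists l : A, forall e : R, 0 < e -> exists N : nat, forall p : nat,
        (N <= p)%N -> nrm (u p - l) < e
}.

(* Hilbert space H = C^n (every finite-dimensional Hilbert space is unitarily
   isomorphic to some C^n), B(H) = 'M[R[i]]_n. *)
Definition adjm (R : realType) (p q : nat) (M : 'M[R[i]]_(p, q)) : 'M[R[i]]_(q, p) :=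
  \matrix_(i, j) (M j i)^*%C.

(* <h, k> = h^* k, linear in the second slot *)
Definition inner (R : realType) (n : nat) (h k : 'cV[R[i]]_n) : R[i] :=
  (adjm h *m k) 0 0.

Definition unitary (R : realType) (n : nat) (U : 'M[R[i]]_n) : Prop :=
  adjm U *m U = 1%:M /\ U *m adjm U = 1%:M.

(* Completely positive map A -> B(H): linear, and for every k the
   amplification M_k(A) -> M_k(B(H)) sends positive elements B^* B of M_k(A)
   to positive (semidefinite) block matrices. *)
Definition cp_map (R : realType) (A : algType R[i]) (star : A -> A) (n : nat)
    (phi : A -> 'M[R[i]]_n) : Prop :=
  (forall (c : R[i]) (a b : A), phi (c *: a + b) = c *: phi a + phi b) /\
  (forall (k : nat) (B : 'I_k -> 'I_k -> A) (xi : 'I_k -> 'cV[R[i]]_n),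
     0 <= \sum_(i < k) \sum_(j < k)
            inner (xi i) (phi (\sum_(l < k) star (B l i) * B l j) *m xi j)).

Definition csum_to (R : realType) (u : nat -> R[i]) (L : R[i]) : Prop :=
  forall e : R, 0 < e -> exists N : nat, forall p : nat,
    (N <= p)%N -> ComplexField.Normc.normc (\sum_(i < p) u i - L) < e.

(* CP instrument: only its values on measurable sets matter *)
Definition cp_instrument (R : realType) (d : measure_display) (X : measurableType d)
    (A : algType R[i]) (star : A -> A) (n : nat) (I : set X -> A -> 'M[R[i]]_n) : Prop :=
  (forall E : set X, measurable E -> cp_map star (I E)) /\
  (forall (a : A) (h k : 'cV[R[i]]_n) (F : nat -> set X),
     (forall i, measurable (F i)) -> trivIset setT F ->
     csum_to (fun i => inner h (I (F i) a *m k))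
             (inner h (I (\bigcup_i F i) a *m k))).

Definition ucp_instrument (R : realType) (d : measure_display) (X : measurableType d)
    (A : algType R[i]) (star : A -> A) (n : nat) (I : set X -> A -> 'M[R[i]]_n) : Prop :=
  cp_instrument star I /\ I setT 1 = 1%:M.

Definition inst_eq (R : realType) (d : measure_display) (X : measurableType d)
    (A : algType R[i]) (n : nat) (I J : set X -> A -> 'M[R[i]]_n) : Prop :=
  forall E : set X, measurable E -> forall a : A, I E a = J E a.

Definition proper_cstar_comb (R : realType) (d : measure_display) (X : measurableType d)
    (A : algType R[i]) (star : A -> A) (n : nat) (I : set X -> A -> 'M[R[i]]_n)
    (m : nat) (T : 'I_m -> 'M[R[i]]_n) (Is : 'I_m -> set X -> A -> 'M[R[i]]_n) : Prop :=
  (forall i, ucp_instrument star (Is i)) /\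
  (forall i, T i \in unitmx) /\
  \sum_(i < m) adjm (T i) *m T i = 1%:M /\
  inst_eq I (fun E a => \sum_(i < m) adjm (T i) *m Is i E a *m T i).

Definition cstar_extreme (R : realType) (d : measure_display) (X : measurableType d)
    (A : algType R[i]) (star : A -> A) (n : nat) (I : set X -> A -> 'M[R[i]]_n) : Prop :=
  ucp_instrument star I /\
  forall (m : nat) (T : 'I_m -> 'M[R[i]]_n) (Is : 'I_m -> set X -> A -> 'M[R[i]]_n),
    proper_cstar_comb star I T Is ->
    exists U : 'I_m -> 'M[R[i]]_n,
      forall i, unitary (U i) /\
                inst_eq (Is i) (fun E a => adjm (U i) *m I E a *m U i).

Definition extreme_instrument (R : realType) (d : measure_display) (X : measurableType d)
    (A : algType R[i]) (star : A -> A) (n : nat) (I : set X -> A -> 'M[R[i]]_n) : Prop :=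
  ucp_instrument star I /\
  forall (t : R) (I1 I2 : set X -> A -> 'M[R[i]]_n),
    0 < t < 1 -> ucp_instrument star I1 -> ucp_instrument star I2 ->
    inst_eq I (fun E a => (t%:C)%C *: I1 E a + ((1 - t)%:C)%C *: I2 E a) ->
    inst_eq I1 I /\ inst_eq I2 I.

(* Main.v *)
Require Import Defs.
From HB Require Import structures.
From mathcomp Require Import all_boot all_order all_algebra.
From mathcomp Require Import complex.
From mathcomp Require Import classical_sets boolp reals measure.
From mathcomp Require Import ring.
Set Implicit Arguments. Unset Strict Implicit. Unset Printing Implicit Defensive.
Import Order.TTheory GRing.Theory Num.Theory.
Local Open Scope ring_scope.

Section Aux.
Variable R : realType.
Local Notation C := R[i].

Lemma adjm_mul p q r (A : 'M[C]_(p, q)) (B : 'M[C]_(q, r)) :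
  adjm (A *m B) = adjm B *m adjm A.
Proof.
apply/matrixP=> i j; rewrite !mxE rmorph_sum; apply: eq_bigr=> k _.
by rewrite !mxE rmorphM mulrC.
Qed.

Lemma adjmD p q (A B : 'M[C]_(p, q)) : adjm (A + B) = adjm A + adjm B.
Proof. by apply/matrixP=> i j; rewrite !mxE rmorphD. Qed.

Lemma adjmZ p q (c : C) (A : 'M[C]_(p, q)) : adjm (c *: A) = (c^*)%C *: adjm A.
Proof. by apply/matrixP=> i j; rewrite !mxE rmorphM. Qed.

Definition fro n (X : 'M[C]_n) := \tr (adjm X *m X).
Definition gin n (X Y : 'M[C]_n) := \tr (adjm X *m Y).

Lemma fro_unitary n (U M : 'M[C]_n) : unitary U -> fro (adjm U *m M *m U) = fro M.
Proof.
move=> [_ HU]; rewrite /fro !adjm_mul.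
have -> : adjm (adjm U) = U by apply/matrixP=> i j; rewrite !mxE conjcK.
rewrite -!mulmxA (mulmxA U) HU mul1mx mxtrace_mulC -!mulmxA HU mulmx1.
by [].
Qed.

Lemma fro_expand n (X Y : 'M[C]_n) (c : C) : (c^*)%C = c ->
  fro (X + c *: Y) = fro X + c * (gin Y X + gin X Y) + c ^+ 2 * fro Y.
Proof.
move=> hc; rewrite /fro /gin adjmD adjmZ hc mulmxDl !mulmxDr.
rewrite -!scalemxAl -!scalemxAr !mxtraceD !mxtraceZ.
ring.
Qed.

Lemma fro_eq0 n (N : 'M[C]_n) : fro N = 0 -> N = 0.
Proof.
rewrite /fro /mxtrace => /eqP; rewrite psumr_eq0; last first.
  move=> i _; rewrite mxE sumr_ge0 // => k _; rewrite mxE mulrC; exact: mulcJ_ge0.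
move=> /allP H; apply/matrixP=> k i; rewrite mxE.
have := H i (mem_index_enum i); rewrite implyTb mxE psumr_eq0; last first.
  by move=> l _; rewrite mxE mulrC; exact: mulcJ_ge0.
move=> /allP /(_ k (mem_index_enum k)); rewrite implyTb mxE mulf_eq0 conjc_eq0.
by rewrite orbb => /eqP.
Qed.

Lemma key n (M M1 M2 : 'M[C]_n) (t : R) : 0 < t < 1 ->
  fro M1 = fro M -> fro M2 = fro M ->
  M = (t%:C)%C *: M1 + ((1 - t)%:C)%C *: M2 -> M1 = M.
Proof.
move=> /andP [t0 t1] h1 h2 hM.
set tau := (t%:C)%C.
have e1 : ((1 - t)%:C)%C = 1 - tau by rewrite rmorphB rmorph1.
have tau0 : tau != 0 by rewrite fmorph_eq0 gt_eqF.
have tau1 : 1 - tau != 0 by rewrite -e1 fmorph_eq0 subr_eq0 gt_eqF.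
set N := M1 - M2.
have eM1 : M1 = M + (1 - tau) *: N.
  by rewrite hM e1 /N; apply/matrixP=> i j; rewrite !mxE; ring.
have eM2 : M2 = M + (- tau) *: N.
  by rewrite hM e1 /N; apply/matrixP=> i j; rewrite !mxE; ring.
have cr : (tau^*)%C = tau by rewrite conjc_real.
have cr1 : ((1 - tau)^*)%C = 1 - tau by rewrite -e1 conjc_real.
have crN : ((- tau)^*)%C = - tau by rewrite /tau -rmorphN conjc_real.
move: h1 h2; rewrite {1}eM1 {1}eM2 (fro_expand _ _ cr1) (fro_expand _ _ crN).
set s := gin N M + gin M N => E1 E2.
have E1' : (1 - tau) * s + (1 - tau) ^+ 2 * fro N = 0.
  by apply: (addrI (fro M)); rewrite addr0 addrA.
have E2' : (- tau) * s + (- tau) ^+ 2 * fro N = 0.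
  by apply: (addrI (fro M)); rewrite addr0 addrA.
have : tau * (1 - tau) * fro N = 0.
  have -> : tau * (1 - tau) * fro N =
    tau * ((1 - tau) * s + (1 - tau) ^+ 2 * fro N) +
    (1 - tau) * ((- tau) * s + (- tau) ^+ 2 * fro N) by ring.
  by rewrite E1' E2' !mulr0 addr0.
move/eqP; rewrite !mulf_eq0 (negbTE tau0) (negbTE tau1) /= => /eqP /fro_eq0 /eqP.
rewrite /N subr_eq0 => /eqP e12.
by rewrite hM -e12 -scalerDl e1 subrKC scale1r.
Qed.

End Aux.

Lemma scal_conj (R : realType) n (s : R) (M : 'M[R[i]]_n) :
  adjm ((s%:C)%C%:M) *m M *m (s%:C)%C%:M = ((s * s)%:C)%C *: M.
Proof.
have -> : adjm ((s%:C)%C%:M : 'M[R[i]]_n) = (s%:C)%C%:M.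
  apply/matrixP=> i j; rewrite !mxE.
  by rewrite eq_sym; case: (i == j); rewrite ?mulr1n ?mulr0n ?conjc_real ?conjc0.
by rewrite mul_scalar_mx mul_mx_scalar scalerA rmorphM.
Qed.

Lemma scal_conj1 (R : realType) n (s : R) :
  adjm ((s%:C)%C%:M : 'M[R[i]]_n) *m (s%:C)%C%:M = ((s * s)%:C)%C *: 1%:M.
Proof. by rewrite -scal_conj mulmx1. Qed.

Theorem theorem3p17 (R : realType) (d : measure_display) (X : measurableType d)
    (A : algType R[i]) (star : A -> A) (nrm : A -> R)
    (hA : cstar_axioms star nrm) (n : nat) (I : set X -> A -> 'M[R[i]]_n) :
  cstar_extreme star I -> extreme_instrument star I.
Proof.
move=> [hI hC]; split=> // t I1 I2 ht hI1 hI2 hE.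
have /andP [t0 t1] := ht.
pose s1 := Num.sqrt t; pose s2 := Num.sqrt (1 - t).
have t1' : 0 < 1 - t by rewrite subr_gt0.
have s1s : s1 * s1 = t by rewrite /s1 -expr2 sqr_sqrtr // ltW.
have s2s : s2 * s2 = 1 - t by rewrite /s2 -expr2 sqr_sqrtr // ltW.
pose T := fun i : 'I_2 => if val i == 0%N then ((s1%:C)%C%:M : 'M[R[i]]_n)
                          else (s2%:C)%C%:M.
pose Is := fun i : 'I_2 => if val i == 0%N then I1 else I2.
have hP : proper_cstar_comb star I T Is.
  split; first by move=> i; rewrite /Is; case: ifP.
  split.
    move=> i; rewrite /T; case: ifP=> _;
    by rewrite unitmxE det_scalar unitfE expf_neq0 // fmorph_eq0 gt_eqF // sqrtr_gt0.
  split.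
    rewrite !big_ord_recl big_ord0 /T /= addr0.
    rewrite !scal_conj1.
    by rewrite s1s s2s -scalerDl -rmorphD subrKC scale1r.
  move=> E mE a; rewrite hE //= !big_ord_recl big_ord0 /T /Is /= addr0.
  by rewrite !scal_conj s1s s2s.
have [U hU] := hC _ _ _ hP.
have [u0 e0] := hU ord0.
have [u1 e1] := hU (lift ord0 ord0).
rewrite /Is /= in e0 e1.
suff H : forall E, measurable E -> forall a, I1 E a = I E a /\ I2 E a = I E a.
  by split=> E mE a; have [] := H E mE a.
move=> E mE a.
have k1 : I1 E a = I E a.
  apply: (@key R n (I E a) (I1 E a) (I2 E a) t ht).
  - by rewrite e0 // fro_unitary.
  - by rewrite e1 // fro_unitary.
  - by rewrite hE.
split=> //.
have := hE E mE a; rewrite /= k1 => h.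
have : ((1 - t)%:C)%C *: I2 E a = ((1 - t)%:C)%C *: I E a.
  apply: (addrI ((t%:C)%C *: I E a)); rewrite -h -scalerDl -rmorphD subrKC scale1r //.
move=> /eqP; rewrite -subr_eq0 -scalerBr scaler_eq0 fmorph_eq0 gt_eqF //= subr_eq0.
by move/eqP.
Qed.
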